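(* Let $Smr(n)$ be the integer whose decimal expansion is the concatenation of $n+1,n,\ldots,2,1$ (so $Smr(0)=1$, $Smr(1)=21$, $Smr(2)=321$, $\ldots$). For every integer $n\geqslant 0$, put $$l=\lceil \log_{10}(n+2)\rceil,\qquad t_l=10^{l-1}-1,\qquad p_l=10^{l-1}\left(l-\frac{10}{9}\right)+l+\frac19,$$ $$\alpha_l=\frac{s_2-2\cdot 10^l s_1+10^{2l}s_0}{(10^l-1)^2},\qquad \mu_l=\frac{10^{p_l}\left(10^{2l-1}-10^{l-1}-1\right)}{(10^l-1)^2},\qquad \theta_l=\frac{10^{p_l}}{10^l-1},$$ where $s_0=Smr(t_l)$, $s_1=Smr(t_l+1)$, $s_2=Smr(t_l+2)$. Then $$Smr(n)=\alpha_l+\mu_l\,10^{l(n-t_l)}+\theta_l\,(n-t_l)\,10^{l(n-t_l)}.$$ *)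

(* Defs.v *)
From HB Require Import structures.
From mathcomp Require Import all_boot all_order all_algebra.
From mathcomp Require Import all_classical all_reals all_analysis.
Set Implicit Arguments. Unset Strict Implicit. Unset Printing Implicit Defensive.
Import Order.TTheory GRing.Theory Num.Theory.

Definition ndigits (k : nat) : nat := (trunc_log 10 k).+1.

Definition dconcat (a b : nat) : nat := a * 10 ^ ndigits b + b.

Fixpoint Smr (n : nat) : nat :=
  match n with
  | 0 => 1
  | m.+1 => dconcat m.+2 (Smr m)
  end.

Local Open Scope ring_scope.
Definition log10 {R : realType} (x : R) : R := ln x / ln 10.

(* Main.v *)
Require Import Defs.
From HB Require Import structures.
From mathcomp Require Import all_boot all_order all_algebra.
From mathcomp Require Import all_classical all_reals all_analysis.
From mathcomp Require Import ring lra.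
Import Order.TTheory GRing.Theory Num.Theory.
Local Open Scope ring_scope.
From mathcomp Require Import zify.
Local Close Scope ring_scope.

Lemma ndigits_eq d k : 10 ^ d <= k < 10 ^ d.+1 -> ndigits k = d.+1.
Proof. by move=> h; rewrite /ndigits (trunc_log_eq _ h). Qed.

Lemma ndigits_lt b : b < 10 ^ ndigits b.
Proof. exact: trunc_log_ltn. Qed.

Lemma ndigits_concat a b : 0 < a -> ndigits (dconcat a b) = ndigits a + ndigits b.
Proof.
move=> a0; rewrite /dconcat.
have h1 := trunc_logP (isT : 1 < 10) a0.
have h2 := trunc_log_ltn a (isT : 1 < 10).
have hb := ndigits_lt b.
set e := ndigits b in hb *; set d := trunc_log 10 a in h1 h2 *.
rewrite /ndigits -/d addSn; congr S; apply: trunc_log_eq => //.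
apply/andP; split.
  rewrite expnD; apply: leq_trans (leq_addr _ _); exact: leq_mul.
rewrite -[(d + e).+1]addSn expnD.
apply: leq_trans (_ : (a.+1) * 10 ^ e <= _).
  by rewrite mulSn addnC ltn_add2r.
exact: leq_mul.
Qed.

Lemma SmrS m : Smr m.+1 = m.+2 * 10 ^ ndigits (Smr m) + Smr m.
Proof. by []. Qed.

Lemma ndigits_Smr_block d t k : 10 ^ d <= t.+1 -> t + k < (10 ^ d.+1).-1 ->
  ndigits (Smr (t + k)) = ndigits (Smr t) + d.+1 * k.
Proof.
move=> h1; elim: k => [|k IH] h2; first by rewrite addn0 muln0 addn0.
rewrite addnS -[Smr _.+1]/(dconcat _ _) ndigits_concat // IH; last by lia.
rewrite (@ndigits_eq d); first by lia.
apply/andP; split; first by lia.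
have : 0 < 10 ^ d.+1 by rewrite expn_gt0.
lia.
Qed.

Lemma ndigits_Smr_pow j :
  9 * ndigits (Smr (10 ^ j - 1)) + 10 ^ j * 10 = 10 ^ j * (9 * j.+1) + 9 * j.+1 + 1.
Proof.
elim: j => [|j IH]; first by [].
have p0 : 0 < 10 ^ j by rewrite expn_gt0.
set X := 10 ^ j in IH p0.
have e : 10 ^ j.+1 - 1 = ((X - 1) + (9 * X - 1)).+1.
  rewrite expnS -/X; lia.
rewrite e -[Smr _.+1]/(dconcat _ _) ndigits_concat //.
have b1 : 10 ^ j <= (X - 1).+1 by rewrite -/X; lia.
have b2 : (X - 1) + (9 * X - 1) < (10 ^ j.+1).-1 by rewrite expnS -/X; lia.
rewrite (@ndigits_Smr_block j _ _ b1 b2).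
rewrite (@ndigits_eq j.+1); last first.
  rewrite !expnS -/X; lia.
rewrite expnS -/X.
nia.
Qed.
Local Open Scope ring_scope.
Lemma closed_form (R : fieldType) (x E c : R) (f : nat -> R) (K : nat) :
  x != 1 -> (2 <= K)%N ->
  (forall k, (k < K)%N -> f k.+1 = f k + (c + k.+1%:R) * E * x ^+ k) ->
  forall k, (k <= K)%N ->
  f k = (f 2 - 2 * x * f 1 + x ^+ 2 * f 0) / (x - 1) ^+ 2
        + E * (c * x - c - 1) / (x - 1) ^+ 2 * x ^+ k
        + E / (x - 1) * k%:R * x ^+ k.
Proof.
move=> x1 K2 hrec.
have x10 : x - 1 != 0 by rewrite subr_eq0.
have f2 : f 2 = f 1 + (c + 2%:R) * E * x ^+ 1 by apply: hrec; apply: leq_trans K2.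
have f1 : f 1 = f 0 + (c + 1%:R) * E * x ^+ 0 by apply: hrec; apply: leq_trans K2.
rewrite f2 f1.
elim=> [|k IH] hk.
  rewrite !expr0 mulr0 mulr1 /=; field; by rewrite x10.
rewrite hrec // IH ?(ltnW hk) // !exprS -!natr1.
field; by rewrite x10.
Qed.

Lemma ceil_log10 (R : realType) (n j : nat) : (10 ^ j <= n.+1 < 10 ^ j.+1)%N ->
  Num.ceil (log10 ((n + 2)%:R : R)) = Posz j.+1.
Proof.
move=> /andP[h1 h2].
have l10 : 0 < ln (10 : R) by rewrite ln_gt0 // ltr1n.
apply: ceil_def; rewrite /log10.
have -> : (Posz j.+1 - 1) = Posz j by rewrite -addn1 PoszD addrK.
rewrite ltr_pdivlMr // ler_pdivrMr //.
rewrite -!pmulrn !mulr_natl -!lnXn //.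
have pos : forall m : nat, (0 < m)%N -> (m%:R : R) \in Num.pos.
  by move=> m m0; rewrite posrE ltr0n.
rewrite -!natrX ltr_ln ?ler_ln ?pos ?expn_gt0 ?addn2 //.
by rewrite ltr_nat ler_nat ltnS h1 /=.
Qed.

Theorem corollary2 (R : realType) (n : nat) :
  let l : int := Num.ceil (log10 ((n + 2)%:R : R)) in
  let t : nat := (10 ^ `|l - 1|%N - 1)%N in
  let p : R := (10 : R) ^ (l - 1) * (l%:~R - 10 / 9) + l%:~R + 1 / 9 in
  let s0 : R := (Smr t)%:R in
  let s1 : R := (Smr t.+1)%:R in
  let s2 : R := (Smr t.+2)%:R in
  let alpha : R := (s2 - 2 * (10 : R) ^ l * s1 + (10 : R) ^ (2 * l) * s0)
                   / ((10 : R) ^ l - 1) ^+ 2 in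
  let mu : R := (10 : R) `^ p * ((10 : R) ^ (2 * l - 1) - (10 : R) ^ (l - 1) - 1)
                / ((10 : R) ^ l - 1) ^+ 2 in
  let theta : R := (10 : R) `^ p / ((10 : R) ^ l - 1) in
  (Smr n)%:R = alpha + mu * (10 : R) ^ (l * (n%:Z - t%:Z))
               + theta * (n%:Z - t%:Z)%:~R * (10 : R) ^ (l * (n%:Z - t%:Z)).
Proof.
cbv zeta.
set j := trunc_log 10 n.+1.
have hj1 : (10 ^ j <= n.+1)%N := trunc_logP (isT : (1 < 10)%N) (ltn0Sn n).
have hj2 : (n.+1 < 10 ^ j.+1)%N := trunc_log_ltn n.+1 (isT : (1 < 10)%N).
have hj : (10 ^ j <= n.+1 < 10 ^ j.+1)%N by rewrite hj1 hj2.
rewrite (@ceil_log10 R n j hj).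
have -> : (Posz j.+1 - 1) = Posz j by rewrite -addn1 PoszD addrK.
rewrite [`|Posz j|%N]/=.
set T := (10 ^ j - 1)%N.
have p0 : (0 < 10 ^ j)%N by rewrite expn_gt0.
set k := (n - T)%N.
have en : n = (T + k)%N by rewrite /k /T; lia.
have -> : (Posz n - Posz T) = Posz k by rewrite en PoszD addrC addKr.
have -> : (2 * Posz j.+1 - 1) = Posz (j + j.+1) by rewrite -PoszM; lia.
rewrite -PoszM -[(2 * Posz j.+1)]PoszM.
rewrite -![(10 : R) ^ Posz _]/((10 : R) ^+ _).
set D := ndigits (Smr T).
have hD := ndigits_Smr_pow j.
rewrite -/T -/D in hD.
have hp : (10 : R) ^+ j * (j.+1%:~R - 10 / 9) + j.+1%:~R + 1 / 9 = D%:R.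
  have H : ((9 * D + 10 ^ j * 10)%N%:R : R) = (10 ^ j * (9 * j.+1) + 9 * j.+1 + 1)%N%:R.
    by rewrite hD.
  rewrite !natrD !natrM natrX in H.
  have -> : (D%:R : R) = (10 ^+ j * (9 * j.+1%:R) + 9 * j.+1%:R + 1 - 10 ^+ j * 10) / 9.
    by rewrite -H; field.
  by field.
rewrite hp powR_mulrn ?ler0n //.
have e1 : (10:R) ^+ ((1 + 1) * j.+1) = (10 ^+ j.+1) ^+ 2 by rewrite mulnC exprM.
have e2 : (10:R) ^+ (j + j.+1) = 10 ^+ j * 10 ^+ j.+1 by rewrite exprD.
rewrite e1 e2 exprM -pmulrn.
have T1 : T.+1 = (10 ^ j)%N by rewrite /T; lia.
have x1 : (10 : R) ^+ j.+1 != 1.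
  by rewrite -natrX pnatr_eq1 -(expn0 10) eqn_exp2l.
have K2 : (2 <= (10 ^ j.+1).-1 - T)%N by rewrite expnS /T; lia.
have hrec : forall i, (i < (10 ^ j.+1).-1 - T)%N ->
   (Smr (T + i.+1))%:R = (Smr (T + i))%:R + ((10 : R) ^+ j + i.+1%:R) * 10 ^+ D * (10 ^+ j.+1) ^+ i.
  move=> i hi.
  have b1 : (10 ^ j <= T.+1)%N by rewrite T1.
  have b2 : (T + i < (10 ^ j.+1).-1)%N by lia.
  rewrite addnS SmrS (@ndigits_Smr_block j T i b1 b2).
  rewrite natrD natrM natrX exprD -exprM addrC; congr (_ + _).
  have -> : (T + i).+2 = (10 ^ j + i.+1)%N by lia.
  by rewrite natrD natrX mulrA.
have := @closed_form R _ _ _ (fun i => (Smr (T + i))%:R) _ x1 K2 hrec k.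
rewrite /= !addn0 !addn1 !addn2 -en => -> //.
move: hj2; rewrite en; lia.

Qed.
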